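(* Let $S$ be a semigroup, let $a\in S$, and define $$P=\{x\in Sa: x\,\mathscr L\, ax\},\quad P'=\{x\in Sa: x\,\mathscr J\, ax\},\quad P''=\{x\in S: x\in xSa\},\quad P'''=\{x\in S: x\in S^1xSa\}.$$ For $x\in Sa$, write $K_x$ for the $\mathscr K$-class of $x$ in $S$ and $K^a_x$ for the $\mathscr K$-class of $x$ in the semigroup $Sa$, for $\mathscr K\in\{\mathscr L,\mathscr R,\mathscr H,\mathscr D,\mathscr J\}$. Then for every $x\in Sa$: (i) $L^a_x=L_x\cap P$ if $x\in P$, and $L^a_x=\{x\}$ if $x\notin P$; (ii) $R^a_x=R_x\cap P''$ if $x\in P''$, and $R^a_x=\{x\}$ if $x\notin P''$; (iii) $H^a_x=H_x$ if $x\in P\cap P''$, and $H^a_x=\{x\}$ if $x\notin P\cap P''$; (iv) $D^a_x=D_x\cap P\cap P''$ if $x\in P\cap P''$; $D^a_x=R^a_x$ if $x\notin P$; and $D^a_x=L^a_x$ if $x\notin P''$; (v) $J^a_x=J_x\cap P'\cap P'''$ if $x\in P'\cap P'''$, and $J^a_x=D^a_x$ if $x\notin P'\cap P'''$.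
   Context: $Sa=\{xa:x\in S\}$. $S^1$ denotes $S$ with an identity adjoined if $S$ is not a monoid. Green's relations on a semigroup $T$: $x\,\mathscr L\,y$ iff $T^1x=T^1y$; $x\,\mathscr R\,y$ iff $xT^1=yT^1$; $x\,\mathscr J\,y$ iff $T^1xT^1=T^1yT^1$; $\mathscr H=\mathscr L\cap\mathscr R$; $\mathscr D=\mathscr L\vee\mathscr R=\mathscr L\circ\mathscr R$. The relations on $S$ and on $Sa$ are computed in the respective semigroups. *)

(* Defs.v *)
Section Green.
Variable S : Type.
Variable mul : S -> S -> S.

(* Elements of T^1 for a subsemigroup T (given as a predicate): None is the
   adjoined identity, Some t with T t. *)
Definition in1 (T : S -> Prop) (u : option S) : Prop :=
  match u with None => True | Some t => T t end.
Definition lmul1 (u : option S) (x : S) : S :=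
  match u with None => x | Some t => mul t x end.
Definition rmul1 (x : S) (u : option S) : S :=
  match u with None => x | Some t => mul x t end.

Definition inT1l (T : S -> Prop) (x y : S) : Prop :=
  exists u, in1 T u /\ x = lmul1 u y.
Definition inT1r (T : S -> Prop) (x y : S) : Prop :=
  exists u, in1 T u /\ x = rmul1 y u.
Definition inT1lr (T : S -> Prop) (x y : S) : Prop :=
  exists u v, in1 T u /\ in1 T v /\ x = rmul1 (lmul1 u y) v.

(* Green's relations computed in the subsemigroup T (for T = whole S,
   use T := fun _ => True). *)
Definition GL (T : S -> Prop) (x y : S) : Prop := inT1l T x y /\ inT1l T y x.
Definition GR (T : S -> Prop) (x y : S) : Prop := inT1r T x y /\ inT1r T y x.
Definition GH (T : S -> Prop) (x y : S) : Prop := GL T x y /\ GR T x y.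
Definition GD (T : S -> Prop) (x y : S) : Prop :=
  exists z, T z /\ GL T x z /\ GR T z y.
Definition GJ (T : S -> Prop) (x y : S) : Prop := inT1lr T x y /\ inT1lr T y x.

Definition full : S -> Prop := fun _ => True.

Definition Sa (a : S) : S -> Prop := fun x => exists s, x = mul s a.

Definition PP (a : S) (x : S) : Prop := Sa a x /\ GL full x (mul a x).
Definition PP' (a : S) (x : S) : Prop := Sa a x /\ GJ full x (mul a x).
Definition PP'' (a : S) (x : S) : Prop := exists s, x = mul (mul x s) a.
Definition PP''' (a : S) (x : S) : Prop :=
  exists u s, in1 full u /\ x = lmul1 u (mul (mul x s) a).

End Green.

Arguments in1 {S} T u.
Arguments lmul1 {S} mul u x.
Arguments rmul1 {S} mul x u.
Arguments inT1l {S} mul T x y.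
Arguments inT1r {S} mul T x y.
Arguments inT1lr {S} mul T x y.
Arguments GL {S} mul T x y.
Arguments GR {S} mul T x y.
Arguments GH {S} mul T x y.
Arguments GD {S} mul T x y.
Arguments GJ {S} mul T x y.
Arguments Sa {S} mul a x.
Arguments PP {S} mul a x.
Arguments PP' {S} mul a x.
Arguments PP'' {S} mul a x.
Arguments PP''' {S} mul a x.

(* Main.v *)
Require Import Defs.

Section Aux.
Variable S : Type.
Variable mul : S -> S -> S.
Hypothesis assoc : forall x y z, mul x (mul y z) = mul (mul x y) z.
Variable a : S.
Local Notation T := (Sa mul a).
Local Notation lm := (lmul1 mul).
Local Notation rm := (rmul1 mul).

Ltac norm := simpl; rewrite ?assoc; reflexivity.

Lemma T_l s y : T y -> T (mul s y).
Proof. intros [m ->]. exists (mul s m). apply assoc. Qed.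
Lemma T_a s : T (mul s a).
Proof. exists s; reflexivity. Qed.

Definition comp (u v : option S) : option S :=
  match u, v with None, _ => v | Some p, None => Some p | Some p, Some q => Some (mul p q) end.
Lemma comp_in1 u v : in1 T u -> in1 T v -> in1 T (comp u v).
Proof. destruct u, v; simpl; auto. intros _ H; apply T_l; exact H. Qed.
Lemma comp_None u v : comp u v = None -> u = None /\ v = None.
Proof. destruct u, v; simpl; try discriminate; auto. Qed.
Lemma in1_full u : in1 (full S) u.
Proof. destruct u; exact I. Qed.
Lemma T_lm u t : T t -> T (lm u t).
Proof. destruct u; simpl; auto. apply T_l. Qed.
Lemma T_rm t v : T t -> in1 T v -> T (rm t v).
Proof. destruct v; simpl; auto. intros _ H; apply T_l; exact H. Qed.
Lemma lm_rm u y v : lm u (rm y v) = rm (lm u y) v.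
Proof. destruct u, v; norm. Qed.

Lemma wl x y : inT1l mul T x y -> inT1l mul (full S) x y.
Proof. intros [u [_ e]]; exists u; split; [apply in1_full|exact e]. Qed.
Lemma wr x y : inT1r mul T x y -> inT1r mul (full S) x y.
Proof. intros [u [_ e]]; exists u; split; [apply in1_full|exact e]. Qed.
Lemma wlr x y : inT1lr mul T x y -> inT1lr mul (full S) x y.
Proof. intros [u [v [_ [_ e]]]]; exists u, v; split; [apply in1_full|split;[apply in1_full|exact e]]. Qed.

Lemma GL_refl x : GL mul T x x.
Proof. split; exists None; split; simpl; auto. Qed.
Lemma GR_refl x : GR mul T x x.
Proof. split; exists None; split; simpl; auto. Qed.

Definition PL x := exists t, T t /\ x = mul t x.
Definition PR x := exists t, T t /\ x = mul x t.
Definition PJ x := exists t t', T t /\ T t' /\ x = mul (mul t x) t'.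

Lemma P_iff x : T x -> (PP mul a x <-> PL x).
Proof.
  intros Tx; split.
  - intros [_ [[u [_ e]] _]]. destruct u as [s|]; simpl in e.
    + exists (mul s a); split; [apply T_a|]. rewrite <- assoc; exact e.
    + exists (mul a a); split; [apply T_a|]. rewrite <- assoc, <- e; exact e.
  - intros [t [[s ->] e]]. split; auto. split.
    + exists (Some s); split; [exact I|]; simpl. rewrite assoc; exact e.
    + exists (Some a); split; [exact I|reflexivity].
Qed.

Lemma P''_iff x : PP'' mul a x <-> PR x.
Proof.
  split.
  - intros [s e]. exists (mul s a); split; [apply T_a|]. rewrite assoc; exact e.
  - intros [t [[s ->] e]]. exists s. rewrite <- assoc; exact e.
Qed.

Lemma PR_T y : PR y -> T y.
Proof. intros [t [[s ->] e]]. exists (mul y s). rewrite <- assoc; exact e. Qed.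

Lemma lm_mul u y x : lm u (mul y x) = mul (lm u y) x.
Proof. destruct u; simpl; [apply assoc|reflexivity]. Qed.
Lemma rm_mul y v t : mul (rm y v) t = mul y (lm v t).
Proof. destruct v; simpl; [symmetry; apply assoc|reflexivity]. Qed.
Lemma lmcomp_a c y : T (mul y (lm c a)).
Proof. destruct c; simpl; [apply T_l; apply T_a| apply T_a]. Qed.

Lemma PJ_iff x : T x -> (PP' mul a x /\ PP''' mul a x <-> PJ x).
Proof.
  intros Tx; split.
  - intros [[_ [[u [v [_ [_ e1]]]] _]] [u2 [s [_ e2]]]].
    rewrite lm_mul in e1.
    rewrite <- assoc in e2.
    assert (e3 : x = lm u2 (mul (rm (mul (lm u a) x) v) (mul s a)))
      by (rewrite <- e1; exact e2).
    rewrite rm_mul, (lm_mul u2), (lm_mul u2) in e3.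
    set (W := lm u2 (lm u a)) in e3.
    set (r := lm v (mul s a)) in e3.
    assert (Tr : T r) by (apply T_lm; apply T_a).
    exists (mul W W), (mul r r). split; [|split].
    + unfold W. destruct u2, u; simpl; rewrite ?assoc;
        first [apply T_a | apply T_l; apply T_a].
    + apply T_l; exact Tr.
    + transitivity (mul (mul W (mul (mul W x) r)) r).
      { rewrite <- e3. exact e3. }
      rewrite ?assoc; reflexivity.
  - intros [t [t' [[s ->] [[s' ->] e]]]]. split.
    + split; auto. split.
      * exists (Some s), (Some (mul s' a)). split; [exact I|split;[exact I|]]. simpl.
        rewrite ?assoc in e; rewrite ?assoc; exact e.
      * exists (Some a), None. split; [exact I|split;[exact I|]]. reflexivity.
    + exists (Some (mul s a)), s'. split; [exact I|]. simpl.
      rewrite ?assoc in e; rewrite ?assoc; exact e.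
Qed.

Lemma LA x y t v : x = mul t x -> y = rm x v -> y = mul t y.
Proof. intros ex ->. transitivity (rm (mul t x) v). { rewrite <- ex; reflexivity. } destruct v; norm. Qed.
Lemma LB x y t u : x = mul x t -> y = lm u x -> y = mul y t.
Proof. intros ex ->. transitivity (lm u (mul x t)). { rewrite <- ex; reflexivity. } destruct u; norm. Qed.

Lemma L_fwd x y : PL x -> GL mul T x y -> PL y.
Proof.
  intros [t [Tt ex]] [[u [Hu e1]] [v [Hv e2]]].
  exists (lm v (rm t u)). split; [apply T_lm; apply T_rm; auto|].
  transitivity (lm v (mul t (lm u y))). { rewrite <- e1, <- ex. exact e2. }
  destruct u, v; norm.
Qed.

Lemma L_back x y : PL x -> PL y -> GL mul (full S) x y -> GL mul T x y.
Proof.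
  intros [t0 [Tt0 ex]] [t [Tt ey]] [[u [_ e1]] [v [_ e2]]]. split.
  - exists (Some (lm u t)). split; [simpl; apply T_lm; auto|].
    transitivity (lm u (mul t y)). { rewrite <- ey; exact e1. } destruct u; norm.
  - exists (Some (lm v t0)). split; [simpl; apply T_lm; auto|].
    transitivity (lm v (mul t0 x)). { rewrite <- ex; exact e2. } destruct v; norm.
Qed.

Lemma L_dich x y : GL mul T x y -> y = x \/ PL x.
Proof.
  intros [[u [Hu e1]] [v [Hv e2]]].
  destruct u as [p|]; [|simpl in e1; left; auto].
  destruct v as [q|]; [|simpl in e2; left; auto].
  simpl in *. right. exists (mul p q). split; [apply T_l; exact Hv|].
  rewrite <- assoc, <- e2; exact e1.
Qed.

Lemma R_fwd x y : PR x -> GR mul T x y -> PR y.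
Proof.
  intros [t [Tt ex]] [[u [Hu e1]] [v [Hv e2]]].
  exists (rm (lm u t) v). split; [apply T_rm; auto; apply T_lm; auto|].
  transitivity (rm (mul (rm y u) t) v). { rewrite <- e1, <- ex. exact e2. }
  destruct u, v; norm.
Qed.

Lemma R_back x y : PR x -> PR y -> GR mul (full S) x y -> GR mul T x y.
Proof.
  intros [t0 [Tt0 ex]] [t [Tt ey]] [[u [_ e1]] [v [_ e2]]]. split.
  - exists (Some (lm u t0)). split; [simpl; apply T_lm; auto|].
    transitivity (mul (rm y u) t0). { rewrite <- e1; exact ex. } destruct u; norm.
  - exists (Some (lm v t)). split; [simpl; apply T_lm; auto|].
    transitivity (mul (rm x v) t). { rewrite <- e2; exact ey. } destruct v; norm.
Qed.

Lemma R_dich x y : GR mul T x y -> y = x \/ PR x.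
Proof.
  intros [[u [Hu e1]] [v [Hv e2]]].
  destruct u as [p|]; [|simpl in e1; left; auto].
  destruct v as [q|]; [|simpl in e2; left; auto].
  simpl in *. right. exists (mul q p). split; [apply T_l; exact Hu|].
  rewrite assoc, <- e2; exact e1.
Qed.

Lemma J_comp u u' v v' x :
  rm (lm u (rm (lm u' x) v')) v = rm (lm (comp u u') x) (comp v' v).
Proof. destruct u, u', v, v'; norm. Qed.

Lemma J_fwd x y : PJ x -> GJ mul T x y -> PJ y.
Proof.
  intros [t [t' [Tt [Tt' ex]]]] [[u [v [Hu [Hv e1]]]] [u' [v' [Hu' [Hv' e2]]]]].
  exists (rm (lm u' t) u), (rm (lm v t') v').
  split; [apply T_rm; auto; apply T_lm; auto|].
  split; [apply T_rm; auto; apply T_lm; auto|].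
  transitivity (rm (lm u' (mul (mul t (rm (lm u y) v)) t')) v').
  { rewrite <- e1, <- ex. exact e2. }
  destruct u, u', v, v'; norm.
Qed.

Lemma J_back x y : PJ x -> PJ y -> GJ mul (full S) x y -> GJ mul T x y.
Proof.
  intros [t0 [t0' [Tt0 [Tt0' ex]]]] [t [t' [Tt [Tt' ey]]]]
    [[p [q [_ [_ e1]]]] [p' [q' [_ [_ e2]]]]]. split.
  - exists (Some (mul (rm t0 p) t)), (Some (mul (rm t' q) t0')).
    split; [simpl; apply T_l; auto|split; [simpl; apply T_l; auto|]].
    transitivity (mul (mul t0 (rm (lm p (mul (mul t y) t')) q)) t0').
    { rewrite <- ey, <- e1. exact ex. }
    destruct p, q; norm.
  - exists (Some (mul (rm t p') t0)), (Some (mul (rm t0' q') t')).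
    split; [simpl; apply T_l; auto|split; [simpl; apply T_l; auto|]].
    transitivity (mul (mul t (rm (lm p' (mul (mul t0 x) t0')) q')) t').
    { rewrite <- ex, <- e2. exact ey. }
    destruct p', q'; norm.
Qed.

End Aux.

Theorem theorem3p8 (S : Type) (mul : S -> S -> S)
  (assoc : forall x y z, mul x (mul y z) = mul (mul x y) z) (a : S) :
  let T := Sa mul a in
  let P := PP mul a in
  let P' := PP' mul a in
  let P'' := PP'' mul a in
  let P''' := PP''' mul a in
  forall x, T x ->
  (* (i) *)
  ((P x -> forall y, (T y /\ GL mul T x y) <-> (GL mul (full S) x y /\ P y)) /\
   (~ P x -> forall y, (T y /\ GL mul T x y) <-> y = x)) /\
  (* (ii) *)
  ((P'' x -> forall y, (T y /\ GR mul T x y) <-> (GR mul (full S) x y /\ P'' y)) /\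
   (~ P'' x -> forall y, (T y /\ GR mul T x y) <-> y = x)) /\
  (* (iii) *)
  ((P x /\ P'' x -> forall y, (T y /\ GH mul T x y) <-> GH mul (full S) x y) /\
   (~ (P x /\ P'' x) -> forall y, (T y /\ GH mul T x y) <-> y = x)) /\
  (* (iv) *)
  ((P x /\ P'' x -> forall y,
      (T y /\ GD mul T x y) <-> (GD mul (full S) x y /\ P y /\ P'' y)) /\
   (~ P x -> forall y, (T y /\ GD mul T x y) <-> (T y /\ GR mul T x y)) /\
   (~ P'' x -> forall y, (T y /\ GD mul T x y) <-> (T y /\ GL mul T x y))) /\
  (* (v) *)
  ((P' x /\ P''' x -> forall y,
      (T y /\ GJ mul T x y) <-> (GJ mul (full S) x y /\ P' y /\ P''' y)) /\
   (~ (P' x /\ P''' x) -> forall y, (T y /\ GJ mul T x y) <-> (T y /\ GD mul T x y))).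
Proof.
  cbv zeta. intros x Tx.
  pose proof (P_iff S mul assoc a) as PI.
  pose proof (P''_iff S mul assoc a) as PRI.
  pose proof (PJ_iff S mul assoc a) as PJI.
  split; [|split; [|split; [|split]]].
  - split.
    + intros Px y. apply (PI x Tx) in Px. split.
      * intros [Ty HL]. split; [split; eapply wl; apply HL|].
        apply (PI y Ty). eapply L_fwd; eauto.
      * intros [HL Py]. assert (Ty : Sa mul a y) by apply Py.
        split; auto. apply (PI y Ty) in Py. eapply L_back; eauto.
    + intros nP y. split.
      * intros [Ty HL]. destruct (L_dich S mul assoc a x y HL) as [?|H]; auto.
        exfalso; apply nP; apply (PI x Tx); exact H.
      * intros ->. split; auto. apply GL_refl.
  - split.
    + intros Px y. apply PRI in Px. split.
      * intros [Ty HR]. split; [split; eapply wr; apply HR|].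
        apply PRI. eapply R_fwd; eauto.
      * intros [HR Py]. apply PRI in Py. split; [eapply PR_T; eauto|].
        eapply R_back; eauto.
    + intros nP y. split.
      * intros [Ty HR]. destruct (R_dich S mul assoc a x y HR) as [?|H]; auto.
        exfalso; apply nP; apply PRI; exact H.
      * intros ->. split; auto. apply GR_refl.
  - split.
    + intros [Px P2x] y. apply (PI x Tx) in Px. apply PRI in P2x. split.
      * intros [Ty [HL HR]]. split; split; [eapply wl|eapply wl|eapply wr|eapply wr];
          first [apply HL|apply HR].
      * intros [HL HR].
        assert (PRy : PR S mul a y).
        { destruct P2x as [t [Tt ex]]. destruct HL as [_ [u [_ e]]].
          exists t; split; auto. eapply LB; eauto. }
        assert (PLy : PL S mul a y).
        { destruct Px as [t [Tt ex]]. destruct HR as [_ [u [_ e]]].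
          exists t; split; auto. eapply LA; eauto. }
        split; [eapply PR_T; eauto|].
        split; [eapply L_back|eapply R_back]; eauto.
    + intros nP y. split.
      * intros [Ty [HL HR]].
        destruct (L_dich S mul assoc a x y HL) as [?|H1]; auto.
        destruct (R_dich S mul assoc a x y HR) as [?|H2]; auto.
        exfalso; apply nP; split; [apply (PI x Tx)|apply PRI]; auto.
      * intros ->. split; auto. split; [apply GL_refl|apply GR_refl].
  - split; [|split].
    + intros [Px P2x] y. apply (PI x Tx) in Px. apply PRI in P2x. split.
      * intros [Ty [z [Tz [HL HR]]]].
        assert (PLz : PL S mul a z) by (eapply L_fwd; eauto).
        assert (PRz : PR S mul a z).
        { destruct P2x as [t [Tt ex]]. destruct HL as [_ [u [_ e]]].
          exists t; split; auto. eapply LB; eauto. }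
        split; [exists z; split; [exact I|split; split;
                 first [eapply wl; apply HL | eapply wr; apply HR]]|].
        split.
        -- apply (PI y Ty). destruct PLz as [t [Tt ez]]. destruct HR as [_ [v [_ e]]].
           exists t; split; auto. eapply LA; eauto.
        -- apply PRI. eapply R_fwd; eauto.
      * intros [[z [_ [HL HR]]] [Py P2y]].
        assert (Ty : Sa mul a y) by apply Py.
        apply (PI y Ty) in Py. apply PRI in P2y.
        assert (PRz : PR S mul a z).
        { destruct P2x as [t [Tt ex]]. destruct HL as [_ [u [_ e]]].
          exists t; split; auto. eapply LB; eauto. }
        assert (PLz : PL S mul a z).
        { destruct Py as [t [Tt ey]]. destruct HR as [[v [_ e]] _].
          exists t; split; auto. eapply LA; eauto. }
        split; auto. exists z. split; [eapply PR_T; eauto|].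
        split; [eapply L_back|eapply R_back]; eauto.
    + intros nP y. split.
      * intros [Ty [z [Tz [HL HR]]]]. split; auto.
        destruct (L_dich S mul assoc a x z HL) as [->|H]; auto.
        exfalso; apply nP; apply (PI x Tx); exact H.
      * intros [Ty HR]. split; auto. exists x. split; auto. split; auto. apply GL_refl.
    + intros nP y. split.
      * intros [Ty [z [Tz [HL HR]]]]. split; auto.
        destruct (R_dich S mul assoc a z y HR) as [->|H]; auto.
        exfalso; apply nP; apply PRI.
        destruct H as [t [Tt ez]]. destruct HL as [[u [_ e]] _].
        exists t; split; auto. eapply LB; eauto.
      * intros [Ty HL]. split; auto. exists y. split; auto. split; auto. apply GR_refl.
  - split.
    + intros Hx y. apply (PJI x Tx) in Hx. split.
      * intros [Ty HJ]. split; [split; eapply wlr; apply HJ|].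
        apply (PJI y Ty). eapply J_fwd; eauto.
      * intros [HJ Hy]. assert (Ty : Sa mul a y) by apply Hy.
        apply (PJI y Ty) in Hy. split; auto. eapply J_back; eauto.
    + intros nP y. split.
      * intros [Ty [[u [v [Hu [Hv e1]]]] [u' [v' [Hu' [Hv' e2]]]]]]. split; auto.
        pose proof (comp_in1 S mul assoc a u u' Hu Hu') as C1.
        pose proof (comp_in1 S mul assoc a v' v Hv' Hv) as C2.
        destruct (comp S mul u u') as [t|] eqn:E1.
        -- destruct (comp S mul v' v) as [t'|] eqn:E2.
           ++ exfalso. apply nP. apply (PJI x Tx). exists t, t'.
              split; auto. split; auto.
              rewrite e2 in e1. rewrite (J_comp S mul assoc) in e1. rewrite E1, E2 in e1. exact e1.
           ++ destruct (comp_None S mul v' v E2) as [-> ->]. simpl in e1, e2.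
              exists y. split; auto. split; [|apply GR_refl].
              split; [exists u|exists u']; auto.
        -- destruct (comp_None S mul u u' E1) as [-> ->]. simpl in e1, e2.
           exists x. split; auto. split; [apply GL_refl|].
           split; [exists v|exists v']; auto.
      * intros [Ty [z [Tz [[[u [Hu e1]] [u' [Hu' e2]]] [[v [Hv e3]] [v' [Hv' e4]]]]]]].
        split; auto. split.
        -- exists u, v. split; auto. split; auto. rewrite e1, e3. apply lm_rm; auto.
        -- exists u', v'. split; auto. split; auto. rewrite e4, e2. reflexivity.
Qed.
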